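(* Let $I'(i,j)$, for $1\le i\le j\le n$, be the smallest index $k\in[i,j]$ such that $d_P(v_i,v_k)\ge |v_iv_j|+d_P(v_k,v_j)$. Then (1) $I'(i,j)\le I'(i,j+1)$ for all $1\le i\le j\le n-1$; and (2) $I'(i,j)\le I'(i+1,j)$ for all $1\le i\le j-1$, $j\le n$.
   Context: Let $v_1,\dots,v_n$ be points of a metric space with metric $|\cdot|$ (symmetric, nonnegative, $|v_iv_j|=0$ iff $i=j$, triangle inequality). For $i\le j$ let $d_P(v_i,v_j)=\sum_{k=i}^{j-1}|v_kv_{k+1}|$ and $d_P(v_j,v_i)=d_P(v_i,v_j)$. Note $I'(i,j)$ is well defined since $d_P(v_i,v_j)\ge|v_iv_j|$. *)

(* Defs.v *)
From Stdlib Require Import Reals Lra Lia Arith.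
Open Scope R_scope.

Definition is_metric {T : Type} (d : T -> T -> R) : Prop :=
  (forall x y, d x y = d y x) /\
  (forall x y, 0 <= d x y) /\
  (forall x y, d x y = 0 <-> x = y) /\
  (forall x y z, d x z <= d x y + d y z).

(* Path length d_P(v_i, v_j) = sum_{k=i}^{j-1} |v_k v_{k+1}| for i <= j,
   symmetrized for i > j. *)
Fixpoint path_len_from {T : Type} (d : T -> T -> R) (v : nat -> T)
    (i : nat) (m : nat) : R :=
  match m with
  | O => 0
  | S m' => d (v i) (v (S i)) + path_len_from d v (S i) m'
  end.

Definition dP {T : Type} (d : T -> T -> R) (v : nat -> T) (i j : nat) : R :=
  if Nat.leb i j then path_len_from d v i (j - i)
  else path_len_from d v j (i - j).

Definition Icond {T : Type} (d : T -> T -> R) (v : nat -> T) (i j k : nat)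
  : Prop :=
  dP d v i k >= d (v i) (v j) + dP d v k j.

Definition is_I' {T : Type} (d : T -> T -> R) (v : nat -> T) (i j k : nat)
  : Prop :=
  (i <= k <= j)%nat /\ Icond d v i j k /\
  (forall k', (i <= k' < k)%nat -> ~ Icond d v i j k').

(* Main.v *)
Require Import Defs.
From Stdlib Require Import Reals Lra Lia Arith.
Open Scope R_scope.

Lemma plf_snoc {T : Type} (d : T -> T -> R) (v : nat -> T) :
  forall m i, path_len_from d v i (S m) = path_len_from d v i m + d (v (i + m)%nat) (v (S (i + m))).
Proof.
  induction m; intros i.
  - simpl. rewrite Nat.add_0_r; lra.
  - change (path_len_from d v i (S (S m))) with
      (d (v i) (v (S i)) + path_len_from d v (S i) (S m)).
    rewrite IHm. simpl path_len_from. replace (S i + m)%nat with (i + S m)%nat by lia. lra.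
Qed.

Lemma dP_le {T : Type} (d : T -> T -> R) (v : nat -> T) a b :
  (a <= b)%nat -> dP d v a b = path_len_from d v a (b - a).
Proof. intros H; unfold dP; rewrite (proj2 (Nat.leb_le a b) H); reflexivity. Qed.

Lemma dP_snoc {T : Type} (d : T -> T -> R) (v : nat -> T) k j :
  (k <= j)%nat -> dP d v k (S j) = dP d v k j + d (v j) (v (S j)).
Proof.
  intros H. rewrite !dP_le by lia.
  replace (S j - k)%nat with (S (j - k)) by lia. rewrite plf_snoc.
  replace (k + (j - k))%nat with j by lia. reflexivity.
Qed.

Lemma dP_cons {T : Type} (d : T -> T -> R) (v : nat -> T) i k :
  (S i <= k)%nat -> dP d v i k = d (v i) (v (S i)) + dP d v (S i) k.
Proof.
  intros H. rewrite !dP_le by lia.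
  replace (k - i)%nat with (S (k - S i)) by lia. reflexivity.
Qed.

Theorem lemma3 (T : Type) (d : T -> T -> R) (v : nat -> T) (n : nat)
  (Hd : is_metric d) :
  (forall i j k1 k2, (1 <= i)%nat -> (i <= j)%nat -> (j <= n - 1)%nat ->
     is_I' d v i j k1 -> is_I' d v i (S j) k2 -> (k1 <= k2)%nat) /\
  (forall i j k1 k2, (1 <= i)%nat -> (i <= j - 1)%nat -> (j <= n)%nat ->
     is_I' d v i j k1 -> is_I' d v (S i) j k2 -> (k1 <= k2)%nat).
Proof.
  destruct Hd as [Hs [Hp [He Ht]]].
  split.
  - intros i j k1 k2 _ Hij _ [B1 [C1 M1]] [B2 [C2 M2]].
    destruct (le_lt_dec k1 k2) as [h|h]; [exact h|exfalso].
    apply (M1 k2); [lia|]. unfold Icond in *.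
    rewrite dP_snoc in C2 by lia.
    pose proof (Ht (v i) (v (S j)) (v j)). rewrite (Hs (v (S j)) (v j)) in H. lra.
  - intros i j k1 k2 _ Hij _ [B1 [C1 M1]] [B2 [C2 M2]].
    destruct (le_lt_dec k1 k2) as [h|h]; [exact h|exfalso].
    apply (M1 k2); [lia|]. unfold Icond in *.
    rewrite dP_cons by lia.
    pose proof (Ht (v i) (v (S i)) (v j)). lra.
Qed.
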